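(* Suppose the Boolean algebra $B$ is complete. Let $W$ be a CFG-space over $B$, let $U,V\subset W$ be arbitrary subsets, and let $F:U\to V$ be an isometry (for the restricted metrics). Then there is an isometry $F':W\to W$ whose restriction to $U$ is $F$.
   Context: A Boolean metric space over a Boolean algebra $B$ is a set $X$ with a symmetric map $d:X\times X\to B$ such that $d(x,y)=0$ iff $x=y$, and $d(x,z)\le d(x,y)\vee d(y,z)$. A map is contractive if $d(f(x),f(y))\le d(x,y)$; an isometry is a bijection preserving $d$. A partition of $B$ is a finite family of pairwise disjoint elements with supremum $1$. Given $x_0,\dots,x_n\in X$ and a partition $a_0,\dots,a_n$, $x\in X$ is a convex combination of them with these coefficients if $a_i\wedge d(x,x_i)=0$ for all $i$. $X$ is convex if such a convex combination exists in $X$ for every choice of points and partition; finitely generated if some finite $S\subset X$ has every element of $X$ as a convex combination of elements of $S$. A CFG-space is a convex, finitely generated Boolean metric space. $B$ is complete if every subset of $B$ has a supremum. *)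

(* Defs.v *)
(* A Boolean algebra is a complemented distributive lattice
   with top and bottom: [ctbDistrLatticeType disp]. *)
From HB Require Import structures.
From Stdlib Require List.
From mathcomp Require Import all_boot all_order.
Set Implicit Arguments. Unset Strict Implicit. Unset Printing Implicit Defensive.
Import Order.TTheory.
Local Open Scope order_scope.

Section BoolMetric.
Context {disp : Order.disp_t} {B : ctbDistrLatticeType disp}.

Definition complete_BA : Prop :=
  forall P : B -> Prop, exists s : B,
    (forall b, P b -> b <= s) /\ (forall u, (forall b, P b -> b <= u) -> s <= u).

Definition bmetric {X : Type} (d : X -> X -> B) : Prop :=
  (forall x y, d x y = d y x) /\
  (forall x y, d x y = \bot <-> x = y) /\
  (forall x y z, d x z <= d x y `|` d y z).

Definition bpartition {n : nat} (a : 'I_n -> B) : Prop :=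
  (forall i j : 'I_n, i != j -> a i `&` a j = \bot) /\
  \join_(i < n) a i = \top.

Definition convex_comb {X : Type} (d : X -> X -> B) (x : X) {n : nat}
  (xs : 'I_n -> X) (a : 'I_n -> B) : Prop :=
  forall i : 'I_n, a i `&` d x (xs i) = \bot.

Definition bconvex {X : Type} (d : X -> X -> B) : Prop :=
  forall (n : nat) (xs : 'I_n -> X) (a : 'I_n -> B),
    bpartition a -> exists x : X, convex_comb d x xs a.

Definition fin_generated {X : Type} (d : X -> X -> B) : Prop :=
  exists S : seq X, forall x : X,
    exists (n : nat) (xs : 'I_n -> X) (a : 'I_n -> B),
      bpartition a /\ (forall i, List.In (xs i) S) /\ convex_comb d x xs a.

Definition CFG_space {X : Type} (d : X -> X -> B) : Prop :=
  bmetric d /\ bconvex d /\ fin_generated d.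

Definition sub_isometry {X : Type} (d : X -> X -> B) (U V : X -> Prop)
  (F : {x | U x} -> {x | V x}) : Prop :=
  bijective F /\ forall p q, d (proj1_sig (F p)) (proj1_sig (F q)) = d (proj1_sig p) (proj1_sig q).

Definition isometry {X : Type} (d : X -> X -> B) (f : X -> X) : Prop :=
  bijective f /\ forall x y, d (f x) (f y) = d x y.

End BoolMetric.
Arguments sub_isometry {disp B X} d U V F.
Arguments complete_BA {disp} B.

(* Main.v *)
Require Import Defs.
From HB Require Import structures.
From mathcomp Require Import all_boot all_order.
From Stdlib Require Import ClassicalEpsilon Classical.
Set Implicit Arguments. Unset Strict Implicit. Unset Printing Implicit Defensive.

Definition pb (P : Prop) : bool := if excluded_middle_informative P then true else false.
Lemma pbP (P : Prop) : reflect P (pb P).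
Proof. by rewrite /pb; case: excluded_middle_informative => H; constructor. Qed.

Lemma comb_pig (T : Type) (R : T -> T -> Prop) (Rr : forall x, R x x)
  (Rs : forall x y, R x y -> R y x) (Rt : forall x y z, R x y -> R y z -> R x z)
  m (ys zs : 'I_m -> T) :
  (forall i j, R (ys i) (ys j) <-> R (zs i) (zs j)) ->
  (forall j, exists k, R (ys j) (zs k)) ->
  forall x k0, R x (zs k0) -> exists j, R x (ys j).
Proof.
move=> Hyz Hcov x k0 Hx.
have [sg Hsg] : exists sg : 'I_m -> 'I_m, forall j, R (ys j) (zs (sg j)).
  exists (fun j => proj1_sig (constructive_indefinite_description _ (Hcov j))).
  by move=> j; case: constructive_indefinite_description.
pose r i j := pb (R (zs i) (zs j)).
have rP i j : reflect (R (zs i) (zs j)) (r i j) by apply: pbP.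
have rsg i j : r i j = r (sg i) (sg j).
  apply/rP/rP => H.
    apply: (Rt _ _ _ (Rs _ _ (Hsg i))); apply: (Rt _ _ _ _ (Hsg j)); exact/Hyz.
  apply/Hyz; apply: (Rt _ _ _ (Hsg i)); apply: (Rt _ _ _ H); exact: (Rs _ _ (Hsg j)).
pose cls j := [set k | r j k].
have clsE i j : (cls i == cls j) = r i j.
  apply/eqP/rP => [H|H].
    have : j \in cls i by rewrite H inE; apply/rP.
    by rewrite inE => /rP.
  apply/setP => k; rewrite !inE; apply/rP/rP => Hk.
    exact: (Rt _ _ _ (Rs _ _ H) Hk).
  exact: (Rt _ _ _ H Hk).
pose K := [set cls j | j in 'I_m].
pose Psi (A : {set 'I_m}) := if [pick k in A] is Some k then cls (sg k) else set0.
have PsiE j : Psi (cls j) = cls (sg j).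
  rewrite /Psi; case: pickP => [k Hk|H]; last by have := H j; rewrite inE; move/rP: (Rr (zs j)) => ->.
  apply/eqP; rewrite clsE -rsg -clsE; apply/eqP/setP => l; rewrite !inE.
  move: Hk; rewrite inE => /rP Hk.
  apply/rP/rP => Hl; [exact: (Rt _ _ _ Hk Hl) | exact: (Rt _ _ _ (Rs _ _ Hk) Hl)].
have KK : Psi @: K = K.
  apply/eqP; rewrite eqEcard; apply/andP; split.
    apply/subsetP => A /imsetP [B' /imsetP [j _ ->] ->]; rewrite PsiE.
    exact: imset_f.
  have -> : #|Psi @: K| = #|K|; last by [].
  apply: card_in_imset.
  move=> A1 A2 /imsetP [j1 _ ->] /imsetP [j2 _ ->]; rewrite !PsiE.
  by move/eqP; rewrite clsE -rsg -clsE => /eqP.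
have : cls k0 \in Psi @: K by rewrite KK; exact: imset_f.
case/imsetP => A /imsetP [j _ ->]; rewrite PsiE => /eqP; rewrite clsE => /rP H.
exists j; apply: (Rt _ _ _ Hx); apply: (Rt _ _ _ H); exact: (Rs _ _ (Hsg j)).
Qed.

Import Order.Theory.
Local Open Scope order_scope.

Section BA.
Context {disp : Order.disp_t} {B : ctbDistrLatticeType disp}.
Implicit Types x y z c : B.

Lemma b_disjC x y : (x `&` y = \bot) <-> (y <= ~` x).
Proof.
split=> H.
  have -> : y = (y `&` x) `|` (y `&` ~` x) by rewrite -meetUr joinxC meetx1.
  by rewrite meetC H join0x leIr.
apply/eqP; rewrite -lex0; apply: le_trans (leI2 (lexx x) H) _.
by rewrite meetxC.
Qed.

Lemma b_disj_le x y : x `&` ~` y = \bot -> x <= y.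
Proof. by move=> H; rewrite -[y]complK; apply/b_disjC; rewrite meetC. Qed.

Lemma b_le_disj x y : x <= y -> x `&` ~` y = \bot.
Proof. by move=> H; rewrite meetC; apply/b_disjC; rewrite complK. Qed.

Lemma b_le0 x : x <= \bot -> x = \bot.
Proof. by rewrite lex0 => /eqP. Qed.

Lemma join_mono_meet (T : Type) (l : seq T) c (f g : T -> B) :
  (forall p, c `&` f p <= g p) -> c `&` \join_(p <- l) f p <= \join_(p <- l) g p.
Proof.
move=> H; elim: l => [|a l IH]; first by rewrite !big_nil meetx0.
by rewrite !big_cons meetUr leU2.
Qed.

Lemma b_mem_le (T : Type) (l : seq T) (f : T -> B) s :
  List.In s l -> f s <= \join_(t <- l) f t.
Proof.
elim: l => [|a l IH] //= [->|H]; rewrite big_cons; first exact: leUl.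
exact: le_trans (IH H) (leUr _ _).
Qed.

Variable hB : complete_BA B.

Definition Sup (P : B -> Prop) : B :=
  proj1_sig (constructive_indefinite_description _ (hB P)).

Lemma Sup_ub (P : B -> Prop) b : P b -> b <= Sup P.
Proof.
rewrite /Sup; case: constructive_indefinite_description => s [H1 H2] /=.
exact: H1.
Qed.

Lemma Sup_le (P : B -> Prop) u : (forall b, P b -> b <= u) -> Sup P <= u.
Proof.
rewrite /Sup; case: constructive_indefinite_description => s [H1 H2] /=.
exact: H2.
Qed.

Lemma Sup_disj x (P : B -> Prop) : (forall b, P b -> x `&` b = \bot) -> x `&` Sup P = \bot.
Proof. by move=> H; apply/b_disjC/Sup_le => b /H /b_disjC. Qed.

Lemma shrink c (P : B -> Prop) : c <> \bot -> c <= Sup P ->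
  exists b, P b /\ c `&` b <> \bot.
Proof.
move=> c0 cS; apply: NNPP => H; apply: c0.
have : c `&` Sup P = \bot.
  apply: Sup_disj => b Pb; apply: NNPP => Hb; apply: H; by exists b.
by move/meet_idPl: cS => ->.
Qed.

Lemma b_refine (K : Type) (l : list K) (P : K -> B -> Prop) c :
  c <> \bot -> (forall k, List.In k l -> c <= Sup (P k)) ->
  exists c', c' <= c /\ c' <> \bot /\
    forall k, List.In k l -> exists b, P k b /\ c' <= b.
Proof.
elim: l c => [|k l IH] c c0 Hc.
  by exists c; split=> //.
have [c' [c'c [c'0 Hc']]] : exists c', c' <= c /\ c' <> \bot /\
    forall k, List.In k l -> exists b, P k b /\ c' <= b.
  by apply: IH => // k' Hk'; apply: Hc; right.
have [b [Pb cb0]] := shrink c'0 (le_trans c'c (Hc k (or_introl erefl))).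
exists (c' `&` b); split; first exact: le_trans (leIl _ _) c'c.
split => // k' [<-|Hk']; first by exists b; split => //; exact: leIr.
have [b' [Pb' c'b']] := Hc' k' Hk'; exists b'; split => //.
exact: le_trans (leIl _ _) c'b'.
Qed.

End BA.

Ltac latI := first [ exact: lexx | apply: leIxl; latI | apply: leIxr; latI ].
Ltac lat := lazymatch goal with
  | |- is_true (_ <= _ `&` _) => rewrite lexI; apply/andP; split; lat
  | _ => latI end.

Section Metric.
Context {disp : Order.disp_t} {B : ctbDistrLatticeType disp}.
Context (W : Type) (d : W -> W -> B) (hd : bmetric d).

Lemma dsym x y : d x y = d y x. Proof. by case: hd. Qed.
Lemma dxx x : d x x = \bot. Proof. by case: hd => _ [H _]; by apply H. Qed.
Lemma d_eq x y : d x y = \bot -> x = y. Proof. by case: hd => _ [H _]; apply H. Qed.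
Lemma tri x y z : d x z <= d x y `|` d y z. Proof. by case: hd => _ [_ H]. Qed.

Lemma tri_r (r : B) u v w : r <= ~` d u v -> r `&` d u w <= d v w.
Proof.
move=> H; apply: le_trans (leI2 (lexx r) (tri u v w)) _.
have H0 : r `&` d u v = \bot by rewrite meetC; apply/b_disjC.
by rewrite meetUr H0 join0x leIr.
Qed.

Lemma Etrans x y z : ~` d x y `&` ~` d y z <= ~` d x z.
Proof.
by rewrite -complU lexC complK tri.
Qed.


Context (hconv : bconvex d).

Lemma glue2 x y (a : B) : exists z, a `&` d z x = \bot /\ ~` a `&` d z y = \bot.
Proof.
pose xs := fun i : 'I_2 => if val i == 0%N then x else y.
pose a' := fun i : 'I_2 => if val i == 0%N then a else ~` a.
have [|z Hz] := @hconv 2 xs a'.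
  split.
    move=> [[|[|i]] Hi] [[|[|j]] Hj] //= _; rewrite /a' /=.
    - exact: meetxC.
    - exact: meetCx.
  by rewrite big_ord_recl big_ord1 /a' /= joinxC.
exists z; split.
  by have := Hz ord0.
by have := Hz (@Ordinal 2 1 isT).
Qed.

Lemma glue_list (l : seq (B * W)) (y0 : W) : exists z,
  \join_(p <- l) p.1 <= \join_(p <- l) (p.1 `&` ~` d z p.2).
Proof.
elim: l => [|[b y] l [z' IH]]; first by exists y0; rewrite !big_nil.
have [z [H1 H2]] := glue2 y z' b.
exists z; rewrite !big_cons /=.
have bE : b <= ~` d z y by rewrite meetC in H1; apply/b_disjC.
have Hb : b `&` ~` d z y = b by apply/meet_idPl.
rewrite Hb leUx leUl /=.
have H3 : ~` b `&` \join_(p <- l) (p.1 `&` ~` d z' p.2) <=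
          \join_(p <- l) (p.1 `&` ~` d z p.2).
  apply: join_mono_meet => -[b1 y1] /=.
  have Hz : ~` b <= ~` d z z' by rewrite meetC in H2; apply/b_disjC.
  rewrite meetCA; apply: leI2 (lexx _) _.
  apply: le_trans (leI2 Hz (lexx _)) _.
  exact: Etrans.
apply: le_trans (_ : b `|` (~` b `&` \join_(p <- l) p.1) <= _).
  by rewrite joinIr joinxC meet1x leUr.
apply: leU2 (lexx _) _.
exact: le_trans (leI2 (lexx _) IH) H3.
Qed.


Context (S : seq W) (hS : forall x : W, exists (n : nat) (xs : 'I_n -> W) (a : 'I_n -> B),
      bpartition a /\ (forall i, List.In (xs i) S) /\ convex_comb d x xs a).
Context (hB : complete_BA B).

Lemma part_zero (x0 : B) n (a : 'I_n -> B) : bpartition a ->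
  (forall i, x0 `&` a i = \bot) -> x0 = \bot.
Proof.
move=> [_ Hj] H; have := joins_disjoint (P := xpredT) (fun i _ => H i).
by rewrite Hj meetx1.
Qed.

Lemma comb_le x n (xs : 'I_n -> W) (a : 'I_n -> B) i :
  convex_comb d x xs a -> a i <= ~` d x (xs i).
Proof. by move=> H; have := H i; rewrite meetC => /b_disjC. Qed.

Lemma glue_inf (J : Type) (b : J -> B) (y : J -> W) (y0 : W) :
  (forall j l, b j `&` b l `&` d (y j) (y l) = \bot) ->
  exists z, forall j, b j `&` d z (y j) = \bot.
Proof.
move=> Hc.
pose c s := Sup hB (fun e => exists j, e = b j `&` ~` d (y j) s).
have [z Hz] := glue_list [seq (c s, s) | s <- S] y0.
rewrite !big_map /= in Hz.
exists z => j; have [n [xs [a [Hp [HS Hcb]]]]] := hS (y j).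
apply: (part_zero Hp) => i.
have h1 : b j `&` a i <= \join_(t <- S) (c t `&` ~` d z t).
  apply: le_trans Hz; apply: le_trans (b_mem_le c (HS i)).
  apply: le_trans (Sup_ub _ (ex_intro _ j erefl)).
  exact: leI2 (lexx _) (comb_le i Hcb).
apply: b_le0.
apply: le_trans (_ : (b j `&` d z (y j)) `&` \join_(t <- S) (c t `&` ~` d z t) <= _).
  rewrite lexI; apply/andP; split; first exact: leIl.
  apply: le_trans h1; lat.
apply: le_trans (join_mono_meet (g := fun _ => \bot) _ _) _; last first.
  by apply: joins_le.
move=> t /=.
have e1 : (b j `&` d z (y j)) `&` (c t `&` ~` d z t) <= (b j `&` d t (y j)) `&` c t.
  rewrite lexI; apply/andP; split; last lat.
  rewrite lexI; apply/andP; split; first lat.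
  apply: (le_trans _ (tri_r _ (lexx (~` d z t)))); lat.
apply: le_trans e1 _; rewrite lex0; apply/eqP; apply: Sup_disj => e [l ->].
apply: b_le0.
apply: le_trans (_ : b l `&` b j `&` d (y l) (y j) <= _); last by rewrite Hc.
rewrite lexI; apply/andP; split; first lat.
rewrite [d (y l) t]dsym.
apply: (le_trans _ (tri_r _ (lexx (~` d t (y l))))); lat.
Qed.


Lemma split_zero (x E : B) : x `&` E = \bot -> x `&` ~` E = \bot -> x = \bot.
Proof.
move=> H1 H2; have <- : x `&` (E `|` ~` E) = x by rewrite joinxC meetx1.
by rewrite meetUr H1 H2 joinxx.
Qed.

Lemma nth_In' (T : Type) (x0 : T) (s : seq T) k : (k < size s)%N -> List.In (nth x0 s k) s.
Proof.
elim: s k => [|a s IH] [|k] //= Hk; first by left.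
by right; apply: IH.
Qed.

Lemma In_nth' (T : Type) (x0 : T) (s : seq T) y : List.In y s ->
  exists k, (k < size s)%N /\ nth x0 s k = y.
Proof.
elim: s => [|a s IH] //= [->|H]; first by exists 0%N.
by have [k [Hk <-]] := IH H; exists k.+1.
Qed.

Lemma mem_In (T : eqType) (x : T) (s : seq T) : x \in s -> List.In x s.
Proof.
elim: s => [|a s IH] //=; rewrite inE => /orP [/eqP ->|H]; first by left.
by right; apply: IH.
Qed.

Lemma onepoint (I : Type) (p q : I -> W)
  (hpq : forall i j, d (p i) (p j) = d (q i) (q j)) (w : W) :
  exists w', forall i, d w' (q i) = d w (p i).
Proof.
pose e i := ~` d w (p i).
pose E := Sup hB (fun b => exists i, b = e i).
pose Ss s := Sup hB (fun b => exists i, b = ~` d s (q i)).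
pose g s := ~` E `&` ~` Ss s.
have pig : ~` E <= \join_(s <- S) g s.
  apply: NNPP => Hn.
  pose c := ~` E `&` ~` \join_(s <- S) g s.
  have c0 : c <> \bot by move=> H; apply: Hn; apply: b_disj_le.
  have cS : forall s, List.In s S -> c <= Ss s.
    move=> s Hs; apply: b_disj_le; apply: b_le0.
    apply: le_trans (_ : g s `&` ~` \join_(s <- S) g s <= _).
      rewrite /c /g; lat.
    apply: le_trans (leI2 (b_mem_le g Hs) (lexx _)) _.
    by rewrite meetxC.
  have [c1 [c1c [c10 Hc1]]] :=
    b_refine (P := fun s b => exists i, b = ~` d s (q i)) c0 cS.
  pose m := size S.
  have nthS : forall k : 'I_m, List.In (nth w S k) S.
    by move=> k; apply: nth_In'.
  have [sg Hsg] : exists sg : 'I_m -> I, forall k : 'I_m, c1 <= ~` d (nth w S k) (q (sg k)).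
    have H : forall k : 'I_m, exists i, c1 <= ~` d (nth w S k) (q i).
      move=> k; have [b [[i ->] Hb]] := Hc1 _ (nthS k); by exists i.
    exists (fun k => proj1_sig (constructive_indefinite_description _ (H k))).
    by move=> k; case: constructive_indefinite_description.
  pose ys k := p (sg k).
  pose zs k := q (sg k).
  pose l2 := w :: [seq ys k | k <- enum 'I_m].
  have Htop : forall y, c1 <= Sup hB (fun b => exists s, List.In s S /\ b = ~` d y s).
    move=> y; apply: le_trans (lex1 c1) _.
    have [n [xs [a [[_ Hp] [HS Hcb]]]]] := hS y.
    rewrite -Hp; apply: joins_le => k _.
    apply: le_trans (comb_le k Hcb) _.
    by apply: Sup_ub; exists (xs k); split.
  have [c2 [c2c1 [c20 Hc2]]] :=
    b_refine (l := l2) (P := fun y b => exists s, List.In s S /\ b = ~` d y s)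
      c10 (fun y _ => Htop y).
  pose R x y := c2 <= ~` d x y.
  have Rr : forall x, R x x by move=> x; rewrite /R dxx compl0 lex1.
  have Rs : forall x y, R x y -> R y x by move=> x y; rewrite /R dsym.
  have Rt : forall x y z, R x y -> R y z -> R x z.
    move=> x y z H1 H2; rewrite /R; apply: le_trans (Etrans x y z).
    by rewrite lexI; apply/andP; split; [exact: H1|exact: H2].
  have cov : forall y, List.In y l2 -> exists k, R y (zs k).
    move=> y Hy; have [b [[s [Hs ->]] Hb]] := Hc2 y Hy.
    have [k [Hk Hks]] := In_nth' w Hs.
    exists (Ordinal Hk); apply: Rt _ _ _ Hb _.
    rewrite -Hks; apply: le_trans c2c1 _; exact: (Hsg (Ordinal Hk)).
  have Hiso : forall i j, R (ys i) (ys j) <-> R (zs i) (zs j).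
    by move=> i j; rewrite /R /ys /zs hpq.
  have Hcov : forall j, exists k, R (ys j) (zs k).
    move=> j; apply: cov; right; apply: List.in_map; apply: mem_In.
    by rewrite mem_enum.
  have [k0 Hk0] := cov w (or_introl erefl).
  have [j Hj] := comb_pig Rr Rs Rt Hiso Hcov Hk0.
  apply: c20; apply: b_le0.
  have H1 : c2 <= d w (ys j).
    apply: le_trans c2c1 _; apply: le_trans c1c _.
    apply: le_trans (_ : ~` E <= _); first by rewrite /c leIl.
    rewrite -[d w (ys j)]complK lexC complK; apply: Sup_ub; by exists (sg j).
  by apply: le_trans (_ : d w (ys j) `&` ~` d w (ys j) <= _); [rewrite lexI; apply/andP; split; [exact: H1|exact: Hj] | rewrite meetxC].
have [z2 Hz2] := glue_list [seq (g s, s) | s <- S] w.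
rewrite !big_map /= in Hz2.
have z2P : forall i, ~` E `&` ~` d z2 (q i) = \bot.
  move=> i; apply: b_le0.
  apply: le_trans (_ : ~` d z2 (q i) `&` \join_(s <- S) (g s `&` ~` d z2 s) <= _).
    rewrite lexI; apply/andP; split; first exact: leIr.
    exact: le_trans (leIl _ _) (le_trans pig Hz2).
  apply: le_trans (join_mono_meet (g := fun _ => \bot) _ _) _; last by apply: joins_le.
  move=> s /=.
  apply: le_trans (_ : ~` d s (q i) `&` ~` Ss s <= _).
    rewrite lexI; apply/andP; split; last by rewrite /g; lat.
    apply: le_trans (Etrans s z2 (q i)); rewrite [d s z2]dsym; lat.
  rewrite b_le_disj //; apply: Sup_ub; by exists i.
pose bb (o : option I) := if o is Some i then e i else ~` E.
pose yy (o : option I) := if o is Some i then q i else z2.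
have eE : forall i, e i <= E by move=> i; apply: Sup_ub; exists i.
have [|w' Hw'] := glue_inf (b := bb) (y := yy) w.
  move=> [i|] [j|] /=.
  - rewrite -hpq; apply: b_le0.
    apply: le_trans (_ : e j `&` d w (p j) <= _); last by rewrite meetC /e meetxC.
    rewrite lexI; apply/andP; split; first lat.
    apply: (le_trans _ (tri_r _ (lexx (~` d (p i) w)))).
    rewrite [d (p i) w]dsym; lat.
  - apply: b_le0; apply: le_trans (_ : E `&` ~` E <= _); last by rewrite meetxC.
    by rewrite lexI; apply/andP; split; [apply: (le_trans _ (eE i)); lat | lat].
  - apply: b_le0; apply: le_trans (_ : E `&` ~` E <= _); last by rewrite meetxC.
    by rewrite lexI; apply/andP; split; [apply: (le_trans _ (eE j)); lat | lat].
  - by rewrite dxx meetx0.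
exists w' => i; apply: compl_inj; apply/le_anti/andP; split; last first.
  by have := Hw' (Some i); rewrite meetC => /b_disjC.
apply: b_disj_le; apply: (split_zero (E := E)).
  rewrite /E; apply: Sup_disj => b [j ->]; apply: b_le0.
  have Hj : e j <= ~` d w' (q j) by have := Hw' (Some j); rewrite meetC => /b_disjC.
  apply: le_trans (_ : e i `&` ~` e i <= _); last by rewrite meetxC.
  rewrite lexI; apply/andP; split; last lat.
  apply: le_trans (_ : e j `&` ~` d (p j) (p i) <= _); last exact: Etrans.
  rewrite lexI; apply/andP; split; first lat.
  rewrite hpq; apply: le_trans (Etrans (q j) w' (q i)).
  rewrite [d (q j) w']dsym; rewrite lexI; apply/andP; split; last lat.
  exact: le_trans (leIr _ _) Hj.
have Hz : ~` E <= ~` d w' z2 by have := Hw' None; rewrite meetC => /b_disjC.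
apply: b_le0; apply: le_trans (_ : ~` E `&` ~` d z2 (q i) <= _); last by rewrite z2P.
rewrite lexI; apply/andP; split; first lat.
apply: le_trans (Etrans z2 w' (q i)); rewrite [d z2 w']dsym lexI; apply/andP; split.
  exact: le_trans (leIr _ _) Hz.
lat.
Qed.



Definition isoC (I : Type) (p q : I -> W) := forall i j, d (p i) (p j) = d (q i) (q j).

Definition extf (I : Type) (p : I -> W) (a : W) (o : option I) : W :=
  if o is Some i then p i else a.

Lemma iso_ext (I : Type) (p q : I -> W) (h : isoC p q) a b :
  (forall i, d a (p i) = d b (q i)) -> isoC (extf p a) (extf q b).
Proof.
move=> hab [i|] [j|] //=.
- by rewrite dsym hab dsym.
- by rewrite !dxx.
Qed.

Lemma isoC_sym (I : Type) (p q : I -> W) : isoC p q -> isoC q p.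
Proof. by move=> h i j; rewrite h. Qed.

Lemma bf (U : W -> Prop) (f : {x | U x} -> W)
  (hf : forall u v, d (f u) (f v) = d (proj1_sig u) (proj1_sig v)) (l : list W) :
  exists (I : Type) (p q : I -> W), isoC p q /\
    (forall x (hx : U x), exists i, p i = x /\ q i = f (exist _ x hx)) /\
    (forall s, List.In s l -> (exists i, p i = s) /\ (exists i, q i = s)).
Proof.
elim: l => [|s l [I [p [q [h [hU hl]]]]]].
  exists {x | U x}, (fun u => proj1_sig u), f; split; first by move=> u v; rewrite hf.
  split=> // x hx; by exists (exist _ x hx).
have [w1 Hw1] := onepoint h s.
have h1 := iso_ext h (b := w1) (a := s) (fun i => esym (Hw1 i)).
have [z Hz] := onepoint (isoC_sym h1) s.
have h2 := iso_ext h1 (a := z) (b := s) Hz.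
exists (option (option I)), (extf (extf p s) z), (extf (extf q w1) s); split=> //.
split.
  move=> x hx; have [i [H1 H2]] := hU x hx; by exists (Some (Some i)).
move=> t [<-|Ht].
  by split; [exists (Some None) | exists None].
have [[i Hi] [j Hj]] := hl t Ht.
by split; [exists (Some (Some i)) | exists (Some (Some j))].
Qed.

Lemma uniq_pt (I : Type) (q : I -> W)
  (hq : forall s, List.In s S -> exists i, q i = s) y y' :
  (forall i, d y (q i) = d y' (q i)) -> y = y'.
Proof.
move=> H; have [n [xs [a [Hp [HS Hcb]]]]] := hS y.
apply: d_eq; apply: (part_zero Hp) => k.
have [i Hi] := hq _ (HS k).
have h1 : a k <= ~` d y (q i) by rewrite Hi; exact: comb_le.
have h2 : a k <= ~` d (q i) y' by rewrite dsym -H.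
apply: b_le0; apply: le_trans (_ : d y y' `&` ~` d y y' <= _); last by rewrite meetxC.
rewrite lexI; apply/andP; split; first lat.
apply: le_trans (Etrans y (q i) y'); rewrite lexI; apply/andP; split.
  exact: le_trans (leIr _ _) h1.
exact: le_trans (leIr _ _) h2.
Qed.

Lemma dist_pt (I : Type) (p q : I -> W)
  (hp : forall s, List.In s S -> exists i, p i = s) x y x' y' :
  (forall i, d x' (q i) = d x (p i)) -> (forall i, d y' (q i) = d y (p i)) ->
  d x y <= d x' y'.
Proof.
move=> Hx Hy; apply: b_disj_le.
have [n [xs [a [Hp [HS Hcb]]]]] := hS x.
apply: (part_zero Hp) => k.
have [i Hi] := hp _ (HS k).
have h1 : a k <= ~` d x (p i) by rewrite Hi; exact: comb_le.
have h1' : a k <= ~` d x' (q i) by rewrite Hx.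
apply: b_le0; apply: le_trans (_ : d y' (q i) `&` ~` d y' (q i) <= _); last by rewrite meetxC.
rewrite lexI; apply/andP; split.
  rewrite Hy [d y (p i)]dsym; apply: (le_trans _ (tri_r y h1)); lat.
apply: le_trans (_ : ~` d (q i) y' <= _); first last.
  by rewrite dsym.
apply: le_trans (Etrans (q i) x' y'); rewrite lexI; apply/andP; split; last lat.
rewrite [d (q i) x']dsym; apply: (le_trans _ h1'); lat.
Qed.

Lemma main_ext (U V : W -> Prop) (F : {x | U x} -> {x | V x})
  (hF : forall u v, d (proj1_sig (F u)) (proj1_sig (F v)) = d (proj1_sig u) (proj1_sig v)) :
  exists F' : W -> W, isometry d F' /\
    forall (x : W) (hx : U x), F' x = proj1_sig (F (exist _ x hx)).
Proof.
have [I [p [q [h [hU hl]]]]] := bf (f := fun u => proj1_sig (F u)) hF S.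
have hp : forall s, List.In s S -> exists i, p i = s by move=> s /hl [].
have hq : forall s, List.In s S -> exists i, q i = s by move=> s /hl [].
pose T (p q : I -> W) (h : isoC p q) (x : W) :=
  proj1_sig (constructive_indefinite_description _ (onepoint h x)).
have TP : forall (p q : I -> W) (h : isoC p q) x i, d (T p q h x) (q i) = d x (p i).
  by move=> p' q' h' x i; rewrite /T; case: constructive_indefinite_description.
pose h' := isoC_sym h.
exists (T p q h); split.
  split.
    exists (T q p h') => x.
      apply: (uniq_pt hp) => i; by rewrite !TP.
    apply: (uniq_pt hq) => i; by rewrite !TP.
  move=> x y; apply/le_anti/andP; split.
    by apply: (dist_pt (q := p) hq) => i; rewrite TP.
  by apply: (dist_pt (q := q) hp) => i; rewrite TP.
move=> x hx; have [i [Hi1 Hi2]] := hU x hx.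
rewrite -Hi2; apply: (uniq_pt hq) => j.
by rewrite TP -Hi1 h.
Qed.

End Metric.


Theorem theorem3 (disp : Order.disp_t) (B : ctbDistrLatticeType disp)
  (W : Type) (d : W -> W -> B) (U V : W -> Prop)
  (F : {x | U x} -> {x | V x}) :
  complete_BA B -> CFG_space d -> sub_isometry d U V F ->
  exists F' : W -> W, isometry d F' /\
    forall (x : W) (hx : U x), F' x = proj1_sig (F (exist _ x hx)).
Proof.
move=> hB [hd [hconv [S hS]]] [_ hF].
exact: (main_ext hd hconv hS hB hF).
Qed.
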